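(* Let $\Gamma$ be a Cayley graph on $n$ vertices, and let $s$ be the order of the stabilizer in $\operatorname{Aut}(\Gamma)$ of a vertex. Then $\Gamma$ is $k$-uniformly vertex-transitive for every integer $k$ with $1\le k\le s$.
   Context: A Cayley graph $C(G,S)$, for a finite group $G$ and subset $S\subset G$, has vertex set $G$, with $a,b$ adjacent iff $a=sb$ or $b=sa$ for some $s\in S$; a graph is Cayley if isomorphic to some $C(G,S)$. A permutation $\sigma$ of $V(\Gamma)$ is identified with its permutation matrix (the $(u,v)$ entry is $1$ iff $\sigma(u)=v$); $J_n$ is the $n\times n$ all-ones matrix. For $k\ge1$, $\Gamma$ is $k$-uniformly vertex-transitive if there is a set of $kn$ distinct automorphisms $\{\sigma_1,\ldots,\sigma_{kn}\}\subset\operatorname{Aut}(\Gamma)$ with $\sum_i\sigma_i=kJ_n$. *)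

(* Defs.v *)
From HB Require Import structures.
From mathcomp Require Import all_boot all_order all_fingroup.
Set Implicit Arguments. Unset Strict Implicit. Unset Printing Implicit Defensive.

Definition is_aut (V : finType) (e : rel V) (s : {perm V}) : bool :=
  [forall x, forall y, e x y == e (s x) (s y)].

(* adjacency of the Cayley graph C(G,S) on vertex set G (= all of gT):
   a ~ b iff a = s b or b = s a for some s in S *)
Definition cayley_rel (gT : finGroupType) (S : {set gT}) : rel gT :=
  fun a b => [exists s in S, (a == s * b)%g || (b == s * a)%g].

Definition is_cayley (V : finType) (e : rel V) : Prop :=
  exists (gT : finGroupType) (S : {set gT}) (f : V -> gT),
    bijective f /\ forall x y, e x y = cayley_rel S (f x) (f y).

(* entry (u,w) of the permutation matrix of s *)
Definition perm_entry (V : finType) (s : {perm V}) (u w : V) : nat :=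
  (s u == w).

(* k-uniformly vertex-transitive: a set A of k*n distinct automorphisms whose
   permutation matrices sum to k J_n (entrywise). *)
Definition k_unif_vt (V : finType) (e : rel V) (k : nat) : Prop :=
  exists A : {set {perm V}},
    [/\ #|A| = k * #|V|,
        (forall s, s \in A -> is_aut e s) &
        forall u w, \sum_(s in A) perm_entry s u w = k].

Definition stab_order (V : finType) (e : rel V) (v : V) : nat :=
  #|[set s : {perm V} | is_aut e s && (s v == v)]|.

(* Main.v *)
Require Import Defs.
From HB Require Import structures.
From mathcomp Require Import all_boot all_order all_fingroup.

Set Implicit Arguments. Unset Strict Implicit. Unset Printing Implicit Defensive.

Lemma is_autM (V : finType) (e : rel V) (s t : {perm V}) :
  is_aut e s -> is_aut e t -> is_aut e (s * t)%g.
Proof.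
move=> /forallP Hs /forallP Ht; apply/forallP=> x; apply/forallP=> y.
rewrite !permM. move/forallP: (Hs x) => /(_ y)/eqP ->.
by move/forallP: (Ht (s x)) => /(_ (s y)).
Qed.

Lemma cayley_rel_mulr (gT : finGroupType) (S : {set gT}) (a b g : gT) :
  cayley_rel S (a * g)%g (b * g)%g = cayley_rel S a b.
Proof.
rewrite /cayley_rel; apply: eq_existsb => s; congr (_ && (_ || _)).
- by rewrite mulgA; apply/eqP/eqP => [/mulIg|->].
- by rewrite mulgA; apply/eqP/eqP => [/mulIg|->].
Qed.

Lemma subset_card (T : finType) (A : {set T}) k : k <= #|A| ->
  exists K : {set T}, K \subset A /\ #|K| = k.
Proof.
move=> hk; exists [set x in take k (enum A)]; split.
- by apply/subsetP => x; rewrite inE => /mem_take; rewrite mem_enum.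
- rewrite cardsE (card_uniqP _); last by apply: take_uniq; apply: enum_uniq.
  rewrite size_take -cardE; case: ltnP => // h.
  by apply/eqP; rewrite eqn_leq h hk.
Qed.

Theorem mainTheorem13 (V : finType) (e : rel V) (v : V) (k : nat) :
  is_cayley e -> 1 <= k <= stab_order e v -> k_unif_vt e k.
Proof.
move=> [gT [S [f [[finv fK finvK] He]]]] /andP[_ hk].
have [K [sKS cK]] := subset_card hk.
have rinj : forall g : gT, injective (fun x => finv (f x * g)%g).
  move=> g x y /(congr1 f); rewrite !finvK => /mulIg.
  by move/(congr1 finv); rewrite !fK.
pose rho g := perm (rinj g).
have rhoE : forall g x, rho g x = finv (f x * g)%g by move=> g x; rewrite permE.
have rho_aut : forall g, is_aut e (rho g).
  move=> g; apply/forallP=> x; apply/forallP=> y.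
  by rewrite !rhoE !He !finvK cayley_rel_mulr.
have Kaut : forall h, h \in K -> is_aut e h /\ h v = v.
  move=> h /(subsetP sKS); rewrite inE => /andP[-> /eqP ->]; by [].
pose F (p : gT * {perm V}) := (p.2 * rho p.1)%g.
pose D := [pred p : gT * {perm V} | p.2 \in K].
have Finj : {in D &, injective F}.
  move=> [g h] [g' h']; rewrite !inE /= => hK h'K; rewrite /F /= => E.
  have := congr1 (fun s : {perm V} => s v) E; rewrite /= !permM.
  rewrite (Kaut h hK).2 (Kaut h' h'K).2 !rhoE => /(congr1 f); rewrite !finvK.
  move/mulgI => eg; subst g'; by rewrite (mulIg _ _ _ E).
have sumD : forall G : {perm V} -> nat,
  \sum_(s in [set F x | x in D]) G s = \sum_(g : gT) \sum_(h in K) G (F (g, h)).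
  move=> G; rewrite big_imset //=.
  by rewrite (pair_big_dep predT (fun _ h => h \in K) (fun g h => G (F (g, h)))).
exists [set F x | x in D]; split.
- rewrite -sum1_card sumD (eq_bigr (fun _ : gT => k)); last first.
    by move=> g _; rewrite -cK -sum1_card.
  rewrite sum_nat_const mulnC; congr (_ * _).
  by apply/esym/(bij_eq_card (f:=f)); exists finv.
- move=> s /imsetP[[g h] hD ->]; rewrite /F /=.
  apply: is_autM; last exact: rho_aut.
  by have [] := Kaut h hD.
- move=> u w; rewrite sumD exchange_big /=.
  rewrite -[in RHS]cK -sum1_card.
  apply: eq_bigr => h hK.
  rewrite (bigD1 ((f (h u))^-1 * f w)%g) //= big1.
    by rewrite /perm_entry /F /= permM rhoE mulgA mulgV mul1g fK eqxx.
  move=> g ng; rewrite /perm_entry /F /= permM rhoE.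
  case: eqP => // E; case/eqP: ng.
  by rewrite -E finvK mulgA mulVg mul1g.
Qed.
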